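(* Let $w_1,\dots,w_n\ge0$, not all zero, and $a_1,\dots,a_n\in\mathbb R$. Let $R(t)=\sum_{i\le n}w_i\exp(a_it)$, $K(t)=\log R(t)$, $v_i(t)=w_i\exp(a_it)/R(t)$ and $\bar a(t)=\sum_{i\le n}v_i(t)a_i$. (i) $K$ is convex, with $$K'(t)=\bar a(t),\quad K''(t)=\sum_{i\le n}v_i(t)\{a_i-\bar a(t)\}^2,\quad K'''(t)=\sum_{i\le n}v_i(t)\{a_i-\bar a(t)\}^3.$$ (ii) For all $t$, $$\log\Big\{\sum_{i\le n}w_ie^{a_it}\Big\}-\log\Big\{\sum_{i\le n}w_i\Big\}=\bar a(0)t+\tfrac12\sum_{i\le n}v_i(0)\{a_i-\bar a(0)\}^2t^2+v(t),$$ where $v_i(0)=w_i/\sum_{j\le n}w_j$, and the remainder satisfies $$|v(t)|\le\tfrac43\mu_n^3|t|^3,\qquad |v(t)|\le\tfrac23 g(\mu_n|t|)\sum_{i\le n}v_i(0)\{a_i-\bar a(0)\}^2|t|^2,$$ with $\mu_n=\max_{i\le n}|a_i-\bar a(0)|$ and $g(u)=u\exp(2u+4u^2)$. *)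

(* Defs.v *)
From HB Require Import structures.
From mathcomp Require Import all_boot all_order all_algebra.
From mathcomp Require Import all_classical all_reals all_analysis.
Set Implicit Arguments. Unset Strict Implicit. Unset Printing Implicit Defensive.
Import Order.TTheory GRing.Theory Num.Theory.
Local Open Scope ring_scope.

Section Defs.
Variables (R : realType) (n : nat) (w a : 'I_n -> R).

Definition Rsum (t : R) : R := \sum_(i < n) w i * expR (a i * t).
Definition Kfun (t : R) : R := ln (Rsum t).
Definition vw (i : 'I_n) (t : R) : R := w i * expR (a i * t) / Rsum t.
Definition abar (t : R) : R := \sum_(i < n) vw i t * a i.
Definition cmoment (k : nat) (t : R) : R :=
  \sum_(i < n) vw i t * (a i - abar t) ^+ k.
Definition remainder (t : R) : R :=
  ln (\sum_(i < n) w i * expR (a i * t)) - ln (\sum_(i < n) w i)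
  - (abar 0 * t + 2^-1 * cmoment 2 0 * t ^+ 2).
Definition mu_n : R := \big[Num.max/0]_(i < n) `|a i - abar 0|.
End Defs.

Definition gfun (R : realType) (u : R) : R := u * expR (2 * u + 4 * u ^+ 2).

Definition convex_on_R (R : realType) (f : R -> R) : Prop :=
  forall (x y l : R), 0 <= l -> l <= 1 ->
    f (l * x + (1 - l) * y) <= l * f x + (1 - l) * f y.

(* Main.v *)
Require Import Defs.
From HB Require Import structures.
From mathcomp Require Import all_boot all_order all_algebra.
From mathcomp Require Import all_classical all_reals all_analysis.
Import Order.TTheory GRing.Theory Num.Theory.
Import numFieldNormedType.Exports.
Local Open Scope ring_scope.

Section Tk.
Variable R : realType.
Implicit Types (f g : R -> R) (df dg x : R).

Lemma dB f g df dg x : is_derive x 1 f df -> is_derive x 1 g dg ->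
  is_derive x 1 (fun y => f y - g y) (df - dg).
Proof. move=> ? ?; exact: is_deriveB. Qed.

Lemma dD f g df dg x : is_derive x 1 f df -> is_derive x 1 g dg ->
  is_derive x 1 (fun y => f y + g y) (df + dg).
Proof. move=> ? ?; exact: is_deriveD. Qed.

Lemma dM f g df dg x : is_derive x 1 f df -> is_derive x 1 g dg ->
  is_derive x 1 (fun y => f y * g y) (df * g x + f x * dg).
Proof.
move=> H1 H2; have := is_deriveM H1 H2.
have -> : (f * g) = (fun y => f y * g y) by apply/funext.
by rewrite /GRing.scale /= addrC mulrC [f x * _]mulrC.
Qed.

Lemma dC (c : R) x : is_derive x 1 (fun _ => c) 0.
Proof. exact: is_derive_cst. Qed.

Lemma dZ f (c : R) df x : is_derive x 1 f df ->
  is_derive x 1 (fun y => c * f y) (c * df).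
Proof. move=> ?; exact: is_deriveZ. Qed.

Lemma dId x : is_derive x 1 (fun y : R => y) 1.
Proof. exact: is_derive_id. Qed.

Lemma dV f df x : f x != 0 -> is_derive x 1 f df ->
  is_derive x 1 (fun y => (f y)^-1) (- df / (f x) ^+ 2).
Proof.
move=> H1 H2; have := is_deriveV H1 H2.
by rewrite /GRing.scale /= mulrC mulNr mulrN.
Qed.

Lemma dexpl (b : R) x : is_derive x 1 (fun y => expR (b * y)) (b * expR (b * x)).
Proof.
have := @is_derive1_comp R expR (fun y => b * y) x (expR (b * x)) b.
rewrite [_ * b]mulrC; apply.
by have := @dZ (fun y => y) b 1 x (dId x); rewrite mulr1.
Qed.

Lemma dln f df x : 0 < f x -> is_derive x 1 f df ->
  is_derive x 1 (fun y => ln (f y)) (df / f x).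
Proof.
move=> fx0 df'; have := @is_derive1_comp R (@ln R) f x (f x)^-1 df.
by rewrite mulrC; apply => //; exact: is_derive1_ln.
Qed.

Lemma dpow (k : nat) x : is_derive x 1 (fun y : R => y ^+ k.+1) (k.+1%:R * x ^+ k).
Proof.
have := @is_deriveX _ _ (fun y : R => y) k.+1 x 1 1 (dId x).
have -> : (fun y : R => y) ^+ k.+1 = (fun y : R => y ^+ k.+1).
  by apply/funext => y; elim: (k.+1) => [|m IH] //=; rewrite !exprS -IH.
by rewrite /GRing.scale /= mulr1.
Qed.

Lemma dsum n (h : 'I_n -> R -> R) (dh : 'I_n -> R) x :
  (forall i, is_derive x 1 (h i) (dh i)) ->
  is_derive x 1 (fun y => \sum_(i < n) h i y) (\sum_(i < n) dh i).
Proof.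
move=> H; have := is_derive_sum H.
congr is_derive; apply/funext => y; by rewrite fct_sumE.
Qed.

End Tk.
Arguments dB {R f g df dg x}.
Arguments dD {R f g df dg x}.
Arguments dM {R f g df dg x}.
Arguments dZ {R f} c {df x}.
Arguments dV {R f df x}.
Arguments dln {R f df x}.
Arguments dsum {R n h dh x}.
From mathcomp Require Import ring lra.
Section Tay.
Variable R : realType.

Lemma rolle0 (h dh : R -> R) (x : R) : x != 0 -> (forall s : R, is_derive s 1 h (dh s)) ->
  h 0 = h x -> exists c, [/\ c != 0, `|c| <= `|x| & dh c = 0].
Proof.
move=> x0 H hx.
have cont : continuous h.
  by move=> r; apply/differentiable_continuous/derivable1_diffP; case: (H r).
have der : forall s, derivable h s 1 by move=> s; case: (H s).
have val (c : R) : is_derive c 1 h 0 -> dh c = 0.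
  by case: (H c) => _ <- [].
case: (ltgtP x 0) x0 => // [xl0|xg0] _.
- have [c cI Hc] := Rolle xl0 (fun s _ => der s) (continuous_subspaceT cont) (esym hx).
  move: cI; rewrite in_itv /= => /andP[c1 c2].
  exists c; split; [by rewrite lt_eqF | | exact: val].
  by rewrite !ltr0_norm // lerN2 ltW.
- have [c cI Hc] := Rolle xg0 (fun s _ => der s) (continuous_subspaceT cont) hx.
  move: cI; rewrite in_itv /= => /andP[c1 c2].
  exists c; split; [by rewrite gt_eqF | | exact: val].
  by rewrite !gtr0_norm // ltW.
Qed.

Lemma taylor3 (f0 f1 f2 f3 : R -> R) (t : R) :
  (forall s : R, is_derive s 1 f0 (f1 s)) ->
  (forall s : R, is_derive s 1 f1 (f2 s)) ->
  (forall s : R, is_derive s 1 f2 (f3 s)) ->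
  exists s : R, `|s| <= `|t| /\
    f0 t - f0 0 - (f1 0 * t + 2^-1 * f2 0 * t ^+ 2) = f3 s * t ^+ 3 / 6.
Proof.
move=> H0 H1 H2.
have [->|t0] := eqVneq t 0.
  by exists 0; split => //; rewrite !expr0n /= !mulr0 mul0r !subrr addr0 subrr.
set C := (f0 t - f0 0 - (f1 0 * t + 2^-1 * f2 0 * t ^+ 2)) / t ^+ 3.
pose h s := f0 s - f0 0 - (f1 0 * s + 2^-1 * f2 0 * s ^+ 2) - C * s ^+ 3.
pose h1 s := f1 s - (f1 0 + f2 0 * s) - C * (3 * s ^+ 2).
pose h2 s := f2 s - f2 0 - C * (6 * s).
pose h3 s := f3 s - C * 6.
have Dh (u : R) : is_derive u 1 h (h1 u).
  rewrite /h; apply: is_derive_eq; rewrite /h1 /GRing.scale /=.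
  by field; rewrite ?pnatr_eq0.
have Dh1 (u : R) : is_derive u 1 h1 (h2 u).
  rewrite /h1; apply: is_derive_eq; rewrite /h2 /GRing.scale /=.
  by field; rewrite ?pnatr_eq0.
have Dh2 (u : R) : is_derive u 1 h2 (h3 u).
  rewrite /h2; apply: is_derive_eq; rewrite /h3 /GRing.scale /=.
  by field; rewrite ?pnatr_eq0.
have t30 : t ^+ 3 != 0 by rewrite expf_neq0.
have [c1 [c10 c1t e1]] : exists c : R, [/\ c != 0, `|c| <= `|t| & h1 c = 0].
  apply: (@rolle0 h h1 t t0 Dh).
  by rewrite /h /C; field; rewrite ?t0 ?expf_neq0 ?pnatr_eq0.
have [c2 [c20 c2t e2]] : exists c : R, [/\ c != 0, `|c| <= `|c1| & h2 c = 0].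
  apply: (@rolle0 h1 h2 c1 c10 Dh1).
  by rewrite e1 /h1; field.
have [c3 [_ c3t e3]] : exists c : R, [/\ c != 0, `|c| <= `|c2| & h3 c = 0].
  apply: (@rolle0 h2 h3 c2 c20 Dh2).
  by rewrite e2 /h2; field.
exists c3; split; first by do 2 (apply: le_trans; last eassumption).
move/eqP: e3; rewrite /h3 subr_eq0 => /eqP ->.
by rewrite /C; field; rewrite ?t0 ?expf_neq0 ?pnatr_eq0.
Qed.
End Tay.

Section Main.
Variables (R : realType) (n : nat) (w a : 'I_n -> R).
Hypothesis hw : forall i, 0 <= w i.
Hypothesis hnz : exists i, w i != 0.

Definition S (k : nat) (t : R) : R := \sum_(i < n) w i * a i ^+ k * expR (a i * t).

Lemma S0_gt0 t : 0 < S 0 t.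
Proof.
case: hnz => i0 wi0.
have wp : 0 < w i0 by rewrite lt_def wi0 hw.
rewrite /S (bigD1 i0) //= expr0 mulr1.
apply: ltr_wpDr; first by apply: sumr_ge0 => i _; rewrite expr0 mulr1 mulr_ge0 ?hw ?expR_ge0.
by rewrite mulr_gt0 ?expR_gt0.
Qed.

Lemma S0_neq0 t : S 0 t != 0.
Proof. by rewrite gt_eqF // S0_gt0. Qed.

Lemma RsumE t : Rsum w a t = S 0 t.
Proof. by rewrite /Rsum /S; apply: eq_bigr => i _; rewrite expr0 mulr1. Qed.

Lemma vwE i t : vw w a i t = w i * expR (a i * t) / S 0 t.
Proof. by rewrite /vw RsumE. Qed.

Lemma vw_ge0 i t : 0 <= vw w a i t.
Proof. by rewrite vwE divr_ge0 ?mulr_ge0 ?hw ?expR_ge0 // ltW // S0_gt0. Qed.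

Lemma momE k t : \sum_(i < n) vw w a i t * a i ^+ k = S k t / S 0 t.
Proof. by rewrite /S mulr_suml; apply: eq_bigr => i _; rewrite vwE; ring. Qed.

Lemma sum_vw t : \sum_(i < n) vw w a i t = 1.
Proof.
have := momE 0 t; under eq_bigr do rewrite expr0 mulr1.
by move=> ->; rewrite divff // S0_neq0.
Qed.

Lemma abar1 t : \sum_(i < n) vw w a i t * a i = S 1 t / S 0 t.
Proof. by rewrite -momE; apply: eq_bigr => i _; rewrite expr1. Qed.

Lemma abarE t : abar w a t = S 1 t / S 0 t.
Proof. exact: abar1. Qed.

Lemma mom2 (p x : 'I_n -> R) c : \sum_(i < n) p i = 1 ->
  \sum_(i < n) p i * (x i - c) ^+ 2 =
  \sum_(i < n) p i * x i ^+ 2 - 2 * c * \sum_(i < n) p i * x i + c ^+ 2.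
Proof.
move=> hp.
transitivity (\sum_(i < n) (p i * x i ^+ 2 + (- (2 * c)) * (p i * x i) + c ^+ 2 * p i)).
  by apply: eq_bigr => i _; ring.
by rewrite !big_split /= -!mulr_sumr hp; ring.
Qed.

Lemma mom3 (p x : 'I_n -> R) c : \sum_(i < n) p i = 1 ->
  \sum_(i < n) p i * (x i - c) ^+ 3 =
  \sum_(i < n) p i * x i ^+ 3 - 3 * c * \sum_(i < n) p i * x i ^+ 2
  + 3 * c ^+ 2 * \sum_(i < n) p i * x i - c ^+ 3.
Proof.
move=> hp.
transitivity (\sum_(i < n) (p i * x i ^+ 3 + (- (3 * c)) * (p i * x i ^+ 2)
   + (3 * c ^+ 2) * (p i * x i) + (- c ^+ 3) * p i)).
  by apply: eq_bigr => i _; ring.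
by rewrite !big_split /= -!mulr_sumr hp; ring.
Qed.

Lemma cm2E t : cmoment w a 2 t = S 2 t / S 0 t - (S 1 t / S 0 t) ^+ 2.
Proof.
rewrite /cmoment (mom2 _ _ _ (sum_vw t)) momE abar1 abarE; ring.
Qed.

Lemma cm3E t : cmoment w a 3 t =
  S 3 t / S 0 t - 3 * (S 1 t / S 0 t) * (S 2 t / S 0 t) + 2 * (S 1 t / S 0 t) ^+ 3.
Proof.
rewrite /cmoment (mom3 _ _ _ (sum_vw t)) !momE abar1 abarE; ring.
Qed.

Lemma dS (k : nat) (t : R) : is_derive t 1 (S k) (S k.+1 t).
Proof.
rewrite /S; apply: is_derive_eq.
  apply: (@dsum R n (fun i y => w i * a i ^+ k * expR (a i * y))
            (fun i => w i * a i ^+ k * (a i * expR (a i * t)))).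
  by move=> i /=; apply: dZ; apply: dexpl.
by rewrite /=; apply: eq_bigr => i _; rewrite exprS; ring.
Qed.

Lemma KfunE : Kfun w a = fun t => ln (S 0 t).
Proof. by apply/funext => t; rewrite /Kfun RsumE. Qed.

Lemma dK (t : R) : is_derive t 1 (Kfun w a) (abar w a t).
Proof.
rewrite KfunE; apply: is_derive_eq; first exact: (dln (S0_gt0 t) (dS 0 t)).
by rewrite abarE.
Qed.

Lemma abarF : abar w a = fun t => S 1 t * (S 0 t)^-1.
Proof. by apply/funext => t; rewrite abarE. Qed.

Lemma dA (t : R) : is_derive t 1 (abar w a) (cmoment w a 2 t).
Proof.
rewrite abarF; apply: is_derive_eq.
  exact: (dM (dS 1 t) (dV (S0_neq0 t) (dS 0 t))).
by rewrite cm2E; field; rewrite S0_neq0.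
Qed.

Lemma cm2F : cmoment w a 2 = fun t =>
  S 2 t * (S 0 t)^-1 - (S 1 t * (S 0 t)^-1) * (S 1 t * (S 0 t)^-1).
Proof. by apply/funext => t; rewrite cm2E expr2. Qed.

Lemma dC2 (t : R) : is_derive t 1 (cmoment w a 2) (cmoment w a 3 t).
Proof.
rewrite cm2F; apply: is_derive_eq.
  exact: (dB (dM (dS 2 t) (dV (S0_neq0 t) (dS 0 t)))
             (dM (dM (dS 1 t) (dV (S0_neq0 t) (dS 0 t)))
                 (dM (dS 1 t) (dV (S0_neq0 t) (dS 0 t))))).
by rewrite cm3E; field; rewrite S0_neq0.
Qed.

Lemma derive1_is (f g : R -> R) : (forall t : R, is_derive t 1 f (g t)) -> derive1 f = g.
Proof. by move=> H; apply/funext => t; rewrite derive1E; case: (H t). Qed.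

Lemma cm2_ge0 t : 0 <= cmoment w a 2 t.
Proof. by apply: sumr_ge0 => i _; rewrite mulr_ge0 ?vw_ge0 ?sqr_ge0. Qed.

Lemma Kcont : continuous (Kfun w a).
Proof. by move=> r; apply/differentiable_continuous/derivable1_diffP; case: (dK r). Qed.

Local Open Scope convex_scope.
Lemma Kconv_aux (x y : R) (t : {i01 R}) : x <= y ->
  (Kfun w a : R^o -> R^o) ((x : R^o) <| t |> (y : R^o)) <= (Kfun w a x : R^o) <| t |> (Kfun w a y : R^o).
Proof.
move=> xy.
have D1 (f g : R -> R) : (forall t : R, is_derive t 1 f (g t)) -> 'D_1 f = g.
  by move=> H; apply/funext => r; case: (H r).
apply: second_derivative_convex => //.
- move=> z _; rewrite (D1 _ _ dK); case: (dA z) => _ E; rewrite E; exact: cm2_ge0.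
- exact/cvg_at_left_filter/Kcont.
- exact/cvg_at_right_filter/Kcont.
- by move=> z _; case: (dK z).
- by move=> z _; rewrite (D1 _ _ dK); case: (dA z).
Qed.
Local Close Scope convex_scope.

Lemma Kconv : convex_on_R (Kfun w a).
Proof.
move=> x y l l0 l1.
have [xy|yx] := leP x y.
- have := @Kconv_aux x y (Itv01 l0 l1) xy; rewrite !convRE /=; exact: id.
- have l0' : 0 <= 1 - l by rewrite subr_ge0.
  have l1' : 1 - l <= 1 by rewrite gerBl.
  have := @Kconv_aux y x (Itv01 l0' l1') (ltW yx); rewrite !convRE /=.
  have -> : unstable.onem (1 - l) = l by rewrite /unstable.onem; ring.
  by move=> H; rewrite addrC [X in _ <= X]addrC.
Qed.

Lemma S0_0 : S 0 0 = \sum_(i < n) w i.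
Proof. by rewrite /S; apply: eq_bigr => i _; rewrite mulr0 expR0 expr0 !mulr1. Qed.

Lemma K0 : Kfun w a 0 = ln (\sum_(i < n) w i).
Proof. by rewrite /Kfun RsumE S0_0. Qed.

Lemma remE (t : R) : exists s : R, `|s| <= `|t| /\
  remainder w a t = cmoment w a 3 s * t ^+ 3 / 6.
Proof.
have [s [hs e]] := @taylor3 R _ _ _ _ t dK dA dC2.
exists s; split => //; rewrite -e K0.
by rewrite /remainder /Kfun /Rsum.
Qed.

Notation mu := (mu_n w a).

Lemma mu_ge i : `|a i - abar w a 0| <= mu.
Proof. rewrite /mu_n; exact: le_bigmax. Qed.

Lemma mu_ge0 : 0 <= mu.
Proof. by case: hnz => i0 _; exact: le_trans (normr_ge0 _) (mu_ge i0). Qed.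

Lemma abar_dev s : `|abar w a s - abar w a 0| <= mu.
Proof.
have -> : abar w a s - abar w a 0 = \sum_(i < n) vw w a i s * (a i - abar w a 0).
  rewrite (eq_bigr (fun i => vw w a i s * a i - abar w a 0 * vw w a i s)); last first.
    by move=> i _; ring.
  by rewrite sumrB -mulr_sumr sum_vw mulr1.
apply: le_trans (ler_norm_sum _ _ _) _.
apply: le_trans (_ : \sum_(i < n) vw w a i s * mu <= _).
  apply: ler_sum => i _; rewrite normrM ger0_norm ?vw_ge0 //.
  by rewrite ler_wpM2l ?vw_ge0 ?mu_ge.
by rewrite -mulr_suml sum_vw mul1r.
Qed.

Lemma dev2 i s : `|a i - abar w a s| <= 2 * mu.
Proof.
have -> : a i - abar w a s = (a i - abar w a 0) - (abar w a s - abar w a 0) by ring.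
apply: le_trans (ler_normB _ _) _.
have := mu_ge i; have := abar_dev s; lra.
Qed.

Lemma c3_le s : `|cmoment w a 3 s| <= 2 * mu * cmoment w a 2 s.
Proof.
apply: le_trans (ler_norm_sum _ _ _) _; rewrite /cmoment mulr_sumr.
apply: ler_sum => i _.
rewrite normrM ger0_norm ?vw_ge0 // exprS normrM [`|_ ^+ 2|]ger0_norm ?sqr_ge0 //.
have h1 := dev2 i s; have h2 : 0 <= vw w a i s * (a i - abar w a s) ^+ 2.
  by rewrite mulr_ge0 ?vw_ge0 ?sqr_ge0.
nra.
Qed.

Lemma c2_le4 s : cmoment w a 2 s <= 4 * mu ^+ 2.
Proof.
apply: le_trans (_ : \sum_(i < n) vw w a i s * (4 * mu ^+ 2) <= _); last first.
  by rewrite -mulr_suml sum_vw mul1r.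
apply: ler_sum => i _; rewrite ler_wpM2l ?vw_ge0 //.
have h1 := dev2 i s; have h2 := normr_ge0 (a i - abar w a s).
rewrite -real_normK ?num_real //; nra.
Qed.

Lemma sum_lin (c0 c1 : R) :
  \sum_(i < n) w i * (c0 + c1 * a i) = c0 * S 0 0 + c1 * S 1 0.
Proof.
rewrite /S !mulr_sumr -big_split; apply: eq_bigr => i _; rewrite mulr0 expR0 /=; ring.
Qed.

Lemma S0_lb s : expR (abar w a 0 * s) * S 0 0 <= S 0 s.
Proof.
set E0 := expR (abar w a 0 * s).
apply: le_trans (_ : \sum_(i < n) w i * (E0 * (1 + (a i - abar w a 0) * s)) <= _).
  rewrite (eq_bigr (fun i => w i * (E0 * (1 - abar w a 0 * s) + (E0 * s) * a i))); last first.
    by move=> i _; congr (_ * _); ring.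
  rewrite sum_lin.
  have -> : S 1 0 = abar w a 0 * S 0 0 by rewrite abarE divfK // S0_neq0.
  by rewrite le_eqVlt; apply/orP; left; apply/eqP; ring.
rewrite /S; apply: ler_sum => i _; rewrite expr0 mulr1 ler_wpM2l //.
have -> : expR (a i * s) = E0 * expR ((a i - abar w a 0) * s).
  by rewrite /E0 -expRD; congr expR; ring.
by rewrite ler_wpM2l ?expR_ge0 // expR_ge1Dx.
Qed.

Lemma vw_le i s : vw w a i s <= expR (mu * `|s|) * vw w a i 0.
Proof.
rewrite !vwE mulr0 expR0 mulr1.
set E := expR (mu * `|s|); set E0 := expR (abar w a 0 * s).
rewrite ler_pdivrMr ?S0_gt0 //.
apply: le_trans (_ : w i * E0 * E <= _).
  rewrite -mulrA ler_wpM2l // /E0 /E -expRD ler_expR.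
  have : (a i - abar w a 0) * s <= mu * `|s|.
    by apply: le_trans (ler_norm _) _; rewrite normrM ler_wpM2r ?mu_ge.
  lra.
have -> : w i * E0 * E = E * (w i / S 0 0) * (E0 * S 0 0).
  by field; rewrite S0_neq0.
rewrite ler_wpM2l ?S0_lb //.
by rewrite mulr_ge0 ?expR_ge0 // divr_ge0 ?hw // ltW // S0_gt0.
Qed.

Lemma c2_le_exp s : cmoment w a 2 s <= expR (mu * `|s|) * cmoment w a 2 0.
Proof.
have E : \sum_(i < n) vw w a i s * (a i - abar w a 0) ^+ 2 =
    cmoment w a 2 s + (abar w a s - abar w a 0) ^+ 2.
  rewrite /cmoment !(mom2 _ _ _ (sum_vw s)).
  have -> : \sum_(i < n) vw w a i s * a i = abar w a s by [].
  ring.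
apply: le_trans (_ : \sum_(i < n) vw w a i s * (a i - abar w a 0) ^+ 2 <= _).
  by rewrite E lerDl sqr_ge0.
rewrite /cmoment mulr_sumr; apply: ler_sum => i _.
by rewrite mulrA ler_wpM2r ?sqr_ge0 ?vw_le.
Qed.

Lemma h6 : `|(6 : R)^-1| = 6^-1.
Proof. by rewrite ger0_norm // invr_ge0 ler0n. Qed.

Lemma rem_bound1 t : `|remainder w a t| <= 4 / 3 * mu ^+ 3 * `|t| ^+ 3.
Proof.
have [s [hs ->]] := remE t.
rewrite !normrM ?normrX h6.
have h1 : `|cmoment w a 3 s| <= 8 * mu ^+ 3.
  apply: le_trans (c3_le s) _.
  have := c2_le4 s; have := mu_ge0; nra.
have h2 := ler_wpM2r (exprn_ge0 3 (normr_ge0 t)) h1.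
lra.
Qed.

Lemma rem_bound2 t : `|remainder w a t| <=
  2 / 3 * gfun (mu * `|t|) * cmoment w a 2 0 * `|t| ^+ 2.
Proof.
have [s [hs ->]] := remE t.
rewrite !normrM ?normrX h6 /gfun.
set G := expR (2 * (mu * `|t|) + 4 * (mu * `|t|) ^+ 2).
have hE : expR (mu * `|s|) <= G.
  rewrite /G ler_expR.
  have h1 : mu * `|s| <= mu * `|t| by rewrite ler_wpM2l ?mu_ge0.
  have h2 : 0 <= mu * `|t| by rewrite mulr_ge0 ?mu_ge0.
  have h3 := sqr_ge0 (mu * `|t|).
  lra.
have c20 := cm2_ge0 0.
have h1 : `|cmoment w a 3 s| <= 2 * mu * (G * cmoment w a 2 0).
  apply: le_trans (c3_le s) _.
  rewrite ler_wpM2l ?mulr_ge0 ?mu_ge0 //.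
  apply: le_trans (c2_le_exp s) _.
  by rewrite ler_wpM2r.
have h2 := ler_wpM2r (exprn_ge0 3 (normr_ge0 t)) h1.
have hP : 0 <= mu * G * cmoment w a 2 0 * `|t| ^+ 3.
  by rewrite !mulr_ge0 ?mu_ge0 ?expR_ge0 ?exprn_ge0.
nra.
Qed.

End Main.

Theorem lemmaA2 (R : realType) (n : nat) (w a : 'I_n -> R)
  (hw : forall i, 0 <= w i) (hnz : exists i, w i != 0) :
  (* (i) *)
  (convex_on_R (Kfun w a)
   /\ (forall t : R, is_derive t 1 (Kfun w a) (abar w a t))
   /\ (forall t : R, is_derive t 1 (derive1 (Kfun w a)) (cmoment w a 2 t))
   /\ (forall t : R, is_derive t 1 (derive1n 2 (Kfun w a)) (cmoment w a 3 t)))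
  /\
  (* (ii) *)
  ((forall i, vw w a i 0 = w i / \sum_(j < n) w j)
   /\ (forall t : R,
        ln (\sum_(i < n) w i * expR (a i * t)) - ln (\sum_(i < n) w i)
        = abar w a 0 * t + 2^-1 * cmoment w a 2 0 * t ^+ 2 + remainder w a t)
   /\ (forall t : R,
        `|remainder w a t| <= 4 / 3 * mu_n w a ^+ 3 * `|t| ^+ 3)
   /\ (forall t : R,
        `|remainder w a t| <=
          2 / 3 * gfun (mu_n w a * `|t|) * cmoment w a 2 0 * `|t| ^+ 2)).
Proof.
have dK' := @dK R n w a hw hnz; have dA' := @dA R n w a hw hnz.
split.
  split; first exact: (@Kconv R n w a hw hnz).
  split; first exact: dK'.
  split; first by move=> t; rewrite (@derive1_is R _ _ dK').
  by move=> t; rewrite derive1nS derive1n1 (@derive1_is R _ _ dK') (@derive1_is R _ _ dA'); exact: (@dC2 R n w a hw hnz).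
split.
  move=> i; rewrite /vw /Rsum mulr0 expR0 mulr1; congr (_ / _).
  by apply: eq_bigr => j _; rewrite mulr0 expR0 mulr1.
split; first by move=> t; rewrite /remainder; ring.
split; first exact: (@rem_bound1 R n w a hw hnz).
exact: (@rem_bound2 R n w a hw hnz).
Qed.
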